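(* Suppose that $\mathbb{M}$ is essentially finitary over a class $\mathcal{C}$ of $\mathbb{M}$-algebras. If a language $K\subseteq\mathbb{M}_\xi\Sigma$ is recognised by some morphism $\varphi:\mathbb{M}\Sigma\to\mathfrak{A}$ with $\mathfrak{A}\in\mathcal{C}$, then the syntactic congruence $\preceq_K$ is a congruence ordering on $\mathbb{M}\Sigma$.
   Context: Fix a set $\Xi$ of sorts. $\mathsf{Pos}^\Xi$: $\Xi$-sorted families of partial orders (''sets'') with sort-wise order-preserving maps. $\mathbb{M}$ is a monad on $\mathsf{Pos}^\Xi$ with multiplication $\mathrm{flat}$ and unit $\mathrm{sing}$, which preserves injective, surjective, bijective functions and preimages, and uses the standard ordering (the order on $\mathbb{M}A$ is $\{(\mathbb{M}p(u),\mathbb{M}q(u)):u\in\mathbb{M}R\}$, $R$ the order of $A$). $\mathbb{M}$-algebras $\langle A,\pi\rangle$: $\pi\circ\mathbb{M}\pi=\pi\circ\mathrm{flat}$, $\pi\circ\mathrm{sing}=\mathrm{id}$; morphisms commute with products. An alphabet is a finite unordered set $\Sigma$; $K\subseteq\mathbb{M}_\xi\Sigma$ is recognised by $\varphi$ if $K=\varphi^{-1}[P]$ for some upwards closed $P\subseteq A_\xi$. Contexts with hole of sort $\zeta$ are $p\in\mathbb{M}(\Sigma+\{\Box\})$ ($\Box$ new of sort $\zeta$), $p[s]$ is the image of $p$ under the algebra morphism extending $\Box\mapsto s$, $c\mapsto\mathrm{sing}(c)$. Syntactic congruence: $s\preceq_K t$ ($s,t$ of the same sort $\zeta$) iff $p[s]\in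 K\Rightarrow p[t]\in K$ for all contexts $p\in\mathbb{M}_\xi(\Sigma+\{\Box\})$ with hole of sort $\zeta$. A preorder $\sqsubseteq$ containing the order of $A$ is a congruence ordering on $\langle A,\pi\rangle$ if $\mathbb{M}q(s)\leq\mathbb{M}q(t)$ implies $\pi(s)\sqsubseteq\pi(t)$, where $q$ is the quotient map onto the ordered set of $\sqsubseteq$-classes. A functor on $\mathsf{Pos}^\Xi$ is finitary if it commutes with directed colimits. For monads $\langle\mathbb{M}_0,\mu_0,\varepsilon_0\rangle$, $\langle\mathbb{M}_1,\mu_1,\varepsilon_1\rangle$ on $\mathsf{Pos}^\Xi$, a morphism of monads is a natural transformation $\varrho:\mathbb{M}_0\Rightarrow\mathbb{M}_1$ with $\varepsilon_1=\varrho\circ\varepsilon_0$ and $\mu_1\circ(\varrho\circ\mathbb{M}_0\varrho)=\varrho\circ\mu_0$. For such $\varrho:\mathbb{M}^\circ\Rightarrow\mathbb{M}$ and an $\mathbb{M}$-algebra $\langle A,\pi\rangle$, its reduct is the $\mathbb{M}^\circ$-algebra $\langle A,\pi\circ\varrho\rangle$. $\varrho$ is dense over a class $\mathcal{D}$ of $\mathbb{M}$-algebras if for all $\mathfrak{A}\in\mathcal{D}$, $C\subseteq A$ and $s\in\mathbb{M}C$ there is $s^\circ\in\mathbb{M}^\circ C$ with $\pi(\varrho(s^\circ))=\pi(s)$. $\mathbb{M}$ is essentially finitary over $\mathcal{C}$ if there is a morphism of monads $\varrho:\mathbb{M}^\circ\Rightarrow\mathbb{M}$ with $\mathbb{M}^\circ$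 finitary and $\varrho$ dense over the closure of $\mathcal{C}$ under binary products. *)

(* Defs.v *)
From Stdlib Require Import List FunctionalExtensionality PropExtensionality
  ProofIrrelevance.

Set Implicit Arguments.
Unset Strict Implicit.

Section Defs.
Variable Xi : Type.

Unset Implicit Arguments.
Record Pos := mkPos {
  car : Xi -> Type;
  le : forall x, car x -> car x -> Prop;
  le_refl : forall x a, le x a a;
  le_trans : forall x a b c, le x a b -> le x b c -> le x a c;
  le_antisym : forall x a b, le x a b -> le x b a -> a = b }.
Set Implicit Arguments.
Arguments le p x _ _ : assert.
Arguments le_refl p {x} a.
Arguments le_trans p {x a b c} _ _.
Arguments le_antisym {p x a b} _ _.

Unset Implicit Arguments.
Record Hom (A B : Pos) := mkHom {
  fn :> forall x, car A x -> car B x;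
  mono : forall x a b, le A x a b -> le B x (fn x a) (fn x b) }.
Set Implicit Arguments.
Arguments mono {A B} h {x a b} _.
Arguments fn {A B} h x _.

Lemma Hom_ext (A B : Pos) (f g : Hom A B) :
  (forall x a, f x a = g x a) -> f = g.
Proof.
  destruct f as [f hf], g as [g hg]; simpl; intro H.
  assert (E : f = g).
  { apply functional_extensionality_dep; intro x.
    apply functional_extensionality; intro a; apply H. }
  subst g; f_equal; apply proof_irrelevance.
Qed.

Definition idH (A : Pos) : Hom A A :=
  @mkHom A A (fun x a => a) (fun x a b h => h).

Definition compH (A B C : Pos) (g : Hom B C) (f : Hom A B) : Hom A C :=
  @mkHom A C (fun x a => g x (f x a))
    (fun x a b h => mono g (mono f h)).

Definition injH (A B : Pos) (f : Hom A B) : Prop :=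
  forall x a b, f x a = f x b -> a = b.
Definition surjH (A B : Pos) (f : Hom A B) : Prop :=
  forall x b, exists a, f x a = b.

Definition subP (A : Pos) (C : forall x, car A x -> Prop) : Pos.
Proof.
  refine (@mkPos (fun x => {a : car A x | C x a})
                 (fun x u v => le A x (proj1_sig u) (proj1_sig v)) _ _ _).
  - intros x a; apply le_refl.
  - intros x a b c; apply le_trans.
  - intros x [a ha] [b hb] h1 h2; simpl in *.
    assert (E : a = b) by (apply (le_antisym h1 h2)).
    subst b; f_equal; apply proof_irrelevance.
Defined.

Definition inclH (A : Pos) (C : forall x, car A x -> Prop) : Hom (subP C) A :=
  @mkHom (subP C) A (fun x u => proj1_sig u) (fun x u v h => h).

Definition prodP (A B : Pos) : Pos.
Proof.
  refine (@mkPos (fun x => (car A x * car B x)%type)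
                 (fun x u v => le A x (fst u) (fst v) /\ le B x (snd u) (snd v))
                 _ _ _).
  - intros x a; split; apply le_refl.
  - intros x a b c [h1 h2] [h3 h4]; split; eapply le_trans; eauto.
  - intros x [a1 a2] [b1 b2] [h1 h2] [h3 h4]; simpl in *.
    f_equal; apply le_antisym; auto.
Defined.

Definition pr1H (A B : Pos) : Hom (prodP A B) A :=
  @mkHom (prodP A B) A (fun x u => fst u) (fun x u v h => proj1 h).
Definition pr2H (A B : Pos) : Hom (prodP A B) B :=
  @mkHom (prodP A B) B (fun x u => snd u) (fun x u v h => proj2 h).

Definition ordP (A : Pos) : Pos :=
  @subP (prodP A A) (fun x u => le A x (fst u) (snd u)).
Definition ordp (A : Pos) : Hom (ordP A) A := compH (pr1H A A) (inclH _).
Definition ordq (A : Pos) : Hom (ordP A) A := compH (pr2H A A) (inclH _).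

Unset Implicit Arguments.
Record Monad := {
  Mo : Pos -> Pos;
  Mmap : forall A B, Hom A B -> Hom (Mo A) (Mo B);
  Mmap_id : forall A x u, Mmap A A (idH A) x u = u;
  Mmap_comp : forall A B C (f : Hom A B) (g : Hom B C) x u,
      Mmap A C (compH g f) x u = Mmap B C g x (Mmap A B f x u);
  flat : forall A, Hom (Mo (Mo A)) (Mo A);
  sing : forall A, Hom A (Mo A);
  flat_nat : forall A B (f : Hom A B) x u,
      Mmap A B f x (flat A x u) = flat B x (Mmap _ _ (Mmap A B f) x u);
  sing_nat : forall A B (f : Hom A B) x a,
      Mmap A B f x (sing A x a) = sing B x (f x a);
  flat_sing : forall A x u, flat A x (sing (Mo A) x u) = u;
  flat_Msing : forall A x u, flat A x (Mmap _ _ (sing A) x u) = u;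
  flat_flat : forall A x u,
      flat A x (flat (Mo A) x u) = flat A x (Mmap _ _ (flat A) x u) }.
Set Implicit Arguments.

Arguments Mmap m {A B} f.

Definition preserves_injective (M : Monad) : Prop :=
  forall A B (f : Hom A B), injH f -> injH (Mmap M f).
Definition preserves_surjective (M : Monad) : Prop :=
  forall A B (f : Hom A B), surjH f -> surjH (Mmap M f).
Definition preserves_bijective (M : Monad) : Prop :=
  forall A B (f : Hom A B), injH f /\ surjH f ->
    injH (Mmap M f) /\ surjH (Mmap M f).
(* M(f^{-1}[C]) = (Mf)^{-1}[MC], with MC identified with its image in MB *)
Definition preserves_preimages (M : Monad) : Prop :=
  forall A B (f : Hom A B) (C : forall x, car B x -> Prop) x (u : car (Mo M A) x),
    (exists v : car (Mo M (subP C)) x, Mmap M (inclH C) x v = Mmap M f x u) <->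
    (exists w : car (Mo M (subP (fun y a => C y (f y a)))) x,
        Mmap M (inclH _) x w = u).
Definition standard_ordering (M : Monad) : Prop :=
  forall A x (s t : car (Mo M A) x),
    le (Mo M A) x s t <->
    exists u : car (Mo M (ordP A)) x,
      Mmap M (ordp A) x u = s /\ Mmap M (ordq A) x u = t.

Definition good_monad (M : Monad) : Prop :=
  preserves_injective M /\ preserves_surjective M /\ preserves_bijective M /\
  preserves_preimages M /\ standard_ordering M.

Unset Implicit Arguments.
Record Alg (M : Monad) := {
  acar : Pos;
  act : Hom (Mo M acar) acar;
  act_assoc : forall x u, act x (Mmap M act x u) = act x (flat M acar x u);
  act_unit : forall x a, act x (sing M acar x a) = a }.
Set Implicit Arguments.
Arguments acar {M} a : rename.
Arguments act {M} a : rename.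

Definition alg_hom (M : Monad) (A B : Pos) (piA : Hom (Mo M A) A)
  (piB : Hom (Mo M B) B) (f : Hom A B) : Prop :=
  forall x u, f x (piA x u) = piB x (Mmap M f x u).

Section ProdAlg.
Variable M : Monad.
Variables A B : Alg M.

Definition prod_act : Hom (Mo M (prodP (acar A) (acar B))) (prodP (acar A) (acar B)).
Proof.
  refine (@mkHom _ (prodP (acar A) (acar B)) (fun x u => (act A x (Mmap M (pr1H _ _) x u),
                                  act B x (Mmap M (pr2H _ _) x u))) _).
  intros x u v h; split; simpl; apply mono; apply mono; exact h.
Defined.

Lemma prod_act_assoc : forall x u,
  prod_act x (Mmap M prod_act x u) = prod_act x (flat M _ x u).
Proof.
  intros x u; simpl; f_equal.
  - rewrite <- Mmap_comp.
    assert (E : compH (pr1H (acar A) (acar B)) prod_act =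
                compH (act A) (Mmap M (pr1H _ _))) by (apply Hom_ext; reflexivity).
    rewrite E, Mmap_comp, act_assoc, flat_nat; reflexivity.
  - rewrite <- Mmap_comp.
    assert (E : compH (pr2H (acar A) (acar B)) prod_act =
                compH (act B) (Mmap M (pr2H _ _))) by (apply Hom_ext; reflexivity).
    rewrite E, Mmap_comp, act_assoc, flat_nat; reflexivity.
Qed.

Lemma prod_act_unit : forall x a, prod_act x (sing M _ x a) = a.
Proof.
  intros x [a b]; simpl; rewrite !sing_nat; simpl; rewrite !act_unit; reflexivity.
Qed.

Definition prod_alg : Alg M :=
  {| acar := prodP (acar A) (acar B); act := prod_act;
     act_assoc := prod_act_assoc; act_unit := prod_act_unit |}.
End ProdAlg.

Inductive prod_closure (M : Monad) (C : Alg M -> Prop) : Alg M -> Prop :=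
| pc_base : forall A, C A -> prod_closure C A
| pc_prod : forall A B, prod_closure C A -> prod_closure C B ->
    prod_closure C (prod_alg A B).

Definition monad_morphism (M0 M1 : Monad) (rho : forall A, Hom (Mo M0 A) (Mo M1 A))
  : Prop :=
  (forall A B (f : Hom A B) x u,
      rho B x (Mmap M0 f x u) = Mmap M1 f x (rho A x u)) /\
  (forall A x a, sing M1 A x a = rho A x (sing M0 A x a)) /\
  (forall A x u,
      flat M1 A x (rho (Mo M1 A) x (Mmap M0 (rho A) x u)) =
      rho A x (flat M0 A x u)).

Definition dense_over (M0 M1 : Monad) (rho : forall A, Hom (Mo M0 A) (Mo M1 A))
  (D : Alg M1 -> Prop) : Prop :=
  forall (A : Alg M1) (C : forall x, car (acar A) x -> Prop) x
         (s : car (Mo M1 (subP C)) x),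
    D A ->
    exists s0 : car (Mo M0 (subP C)) x,
      act A x (Mmap M1 (inclH C) x (rho _ x s0)) = act A x (Mmap M1 (inclH C) x s).

Unset Implicit Arguments.
Record Diagram := {
  dI : Type;
  dle : dI -> dI -> Prop;
  dobj : dI -> Pos;
  dmap : forall i j, dle i j -> Hom (dobj i) (dobj j) }.
Set Implicit Arguments.
Arguments dmap {d i j} _.

Definition directed (D : Diagram) : Prop :=
  (forall i, dle D i i) /\
  (forall i j k, dle D i j -> dle D j k -> dle D i k) /\
  inhabited (dI D) /\
  (forall i j, exists k, dle D i k /\ dle D j k) /\
  (forall i (h : dle D i i) x a, dmap h x a = a) /\
  (forall i j k (h1 : dle D i j) (h2 : dle D j k) (h3 : dle D i k) x a,
      dmap h3 x a = dmap h2 x (dmap h1 x a)).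

Definition cocone (D : Diagram) (C : Pos) (c : forall i, Hom (dobj D i) C) : Prop :=
  forall i j (h : dle D i j) x a, c j x (dmap h x a) = c i x a.

Definition is_colimit (D : Diagram) (C : Pos) (c : forall i, Hom (dobj D i) C)
  : Prop :=
  cocone c /\
  forall (E : Pos) (e : forall i, Hom (dobj D i) E), cocone e ->
    exists u : Hom C E,
      (forall i x a, u x (c i x a) = e i x a) /\
      (forall u' : Hom C E, (forall i x a, u' x (c i x a) = e i x a) ->
         forall x a, u' x a = u x a).

Definition mapDiagram (M : Monad) (D : Diagram) : Diagram :=
  {| dI := dI D; dle := dle D; dobj := fun i => Mo M (dobj D i);
     dmap := fun i j h => Mmap M (dmap h) |}.

Definition finitary (M : Monad) : Prop :=
  forall (D : Diagram) (C : Pos) (c : forall i, Hom (dobj D i) C),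
    directed D -> is_colimit c ->
    @is_colimit (mapDiagram M D) (Mo M C) (fun i => Mmap M (c i)).

Definition essentially_finitary (M : Monad) (CC : Alg M -> Prop) : Prop :=
  exists (M0 : Monad) (rho : forall A, Hom (Mo M0 A) (Mo M A)),
    finitary M0 /\ monad_morphism rho /\ dense_over rho (prod_closure CC).

Definition alphabet (S : Pos) : Prop :=
  (forall x a b, le S x a b <-> a = b) /\
  exists l : list {x : Xi & car S x}, forall e, In e l.

Definition upclosed (A : Pos) (x : Xi) (P : car A x -> Prop) : Prop :=
  forall a b, le A x a b -> P a -> P b.

Definition recognises (M : Monad) (S : Pos) (x : Xi) (K : car (Mo M S) x -> Prop)
  (A : Alg M) (phi : Hom (Mo M S) (acar A)) : Prop :=
  alg_hom (flat M S) (act A) phi /\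
  exists P : car (acar A) x -> Prop, upclosed P /\ forall s, K s <-> P (phi x s).

Inductive boxT (z : Xi) : Xi -> Type := Box : boxT z z.

(* Sigma + {box}, box a new letter of sort z, unordered *)
Definition holeP (S : Pos) (z : Xi) : Pos.
Proof.
  refine (@mkPos (fun x => (car S x + boxT z x)%type) (fun x a b => a = b) _ _ _).
  - reflexivity.
  - intros; congruence.
  - auto.
Defined.

Definition fillMap (M : Monad) (S : Pos) (z : Xi) (s : car (Mo M S) z)
  : Hom (holeP S z) (Mo M S).
Proof.
  refine (@mkHom (holeP S z) (Mo M S)
    (fun x a => match a with
                | inl c => sing M S x c
                | inr b => match b in boxT _ y return car (Mo M S) y with
                           | Box _ => s end
                end) _).
  intros x a b h; simpl in h; subst b; apply le_refl.
Defined.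

(* p[s] : image of p under the algebra morphism flat . M(g) extending
   box |-> s, c |-> sing c *)
Definition plug (M : Monad) (S : Pos) (z x : Xi) (p : car (Mo M (holeP S z)) x)
  (s : car (Mo M S) z) : car (Mo M S) x :=
  flat M S x (Mmap M (fillMap s) x p).

Definition syntactic (M : Monad) (S : Pos) (xi : Xi) (K : car (Mo M S) xi -> Prop)
  : forall z, car (Mo M S) z -> car (Mo M S) z -> Prop :=
  fun z s t => forall p : car (Mo M (holeP S z)) xi, K (plug p s) -> K (plug p t).

Definition preorder_above (A : Pos) (r : forall x, car A x -> car A x -> Prop)
  : Prop :=
  (forall x a, r x a a) /\ (forall x a b c, r x a b -> r x b c -> r x a c) /\
  (forall x a b, le A x a b -> r x a b).

Section Quot.
Variable A : Pos.
Unset Implicit Arguments.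
Variable r : forall x, car A x -> car A x -> Prop.
Set Implicit Arguments.
Hypothesis Hr : preorder_above r.

Definition cls (x : Xi) (a : car A x) : car A x -> Prop :=
  fun b => r x a b /\ r x b a.

Definition quotP : Pos.
Proof.
  refine (@mkPos (fun x => {X : car A x -> Prop | exists a, X = cls a})
    (fun x X Y => exists a b, proj1_sig X a /\ proj1_sig Y b /\ r x a b) _ _ _);
  destruct Hr as [Hrefl [Htrans Hle]].
  - intros x [X [a ->]]; exists a, a; simpl; unfold cls; auto.
  - intros x [X [a ->]] [Y [b ->]] [Z [c ->]]; simpl; unfold cls.
    intros [a1 [b1 [[? ?] [[? ?] ?]]]] [b2 [c2 [[? ?] [[? ?] ?]]]].
    exists a, c; repeat split; auto.
    apply Htrans with a1; auto. apply Htrans with b1; auto.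
    apply Htrans with b; auto. apply Htrans with b2; auto.
    apply Htrans with c2; auto.
  - intros x [X [a ->]] [Y [b ->]]; simpl; unfold cls.
    intros [a1 [b1 [[? ?] [[? ?] ?]]]] [b2 [a2 [[? ?] [[? ?] ?]]]].
    assert (Hab : r x a b).
    { apply Htrans with a1; auto. apply Htrans with b1; auto. }
    assert (Hba : r x b a).
    { apply Htrans with b2; auto. apply Htrans with a2; auto. }
    apply eq_sig_hprop; [intros; apply proof_irrelevance|]; simpl.
    apply functional_extensionality; intro c; apply propositional_extensionality;
      unfold cls; split; intros [? ?]; split; eauto.
Defined.

Definition quotH : Hom A quotP.
Proof.
  refine (@mkHom A quotP (fun x a => exist _ (cls a) (ex_intro _ a eq_refl)) _).
  destruct Hr as [Hrefl [Htrans Hle]].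
  intros x a b h; simpl. exists a, b; unfold cls; repeat split; auto.
Defined.
End Quot.

Definition congruence_ordering (M : Monad) (A : Pos) (pi : Hom (Mo M A) A)
  (r : forall x, car A x -> car A x -> Prop) : Prop :=
  exists H : preorder_above r,
    forall x (s t : car (Mo M A) x),
      le (Mo M (quotP H)) x (Mmap M (quotH H) x s) (Mmap M (quotH H) x t) ->
      r x (pi x s) (pi x t).

End Defs.

Arguments car {Xi} p x.
Arguments le {Xi} p x _ _.
Arguments le_refl {Xi} p {x} a.
Arguments le_trans {Xi} p {x a b c} _ _.
Arguments le_antisym {Xi p x a b} _ _.
Arguments Hom {Xi} A B.
Arguments mkHom {Xi A B} fn mono.
Arguments fn {Xi A B} h x _.
Arguments mono {Xi A B} h {x a b} _.
Arguments Mo {Xi} m A.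
Arguments Mmap {Xi} m {A B} f.
Arguments flat {Xi} m A.
Arguments sing {Xi} m A.
Arguments Alg {Xi} M.
Arguments acar {Xi M} a : rename.
Arguments act {Xi M} a : rename.
Arguments dI {Xi} d.
Arguments dle {Xi} d _ _.
Arguments dobj {Xi} d _.
Arguments dmap {Xi d i j} _.

(* Main.v *)
Require Import Defs.
From Stdlib Require Import List FunctionalExtensionality PropExtensionality ProofIrrelevance ClassicalEpsilon.
Set Implicit Arguments.
Unset Strict Implicit.


Lemma Mmap_ext (Xi : Type) (M : Monad Xi) (A B : Pos Xi) (f g : Hom A B) :
  (forall x a, f x a = g x a) -> forall x u, Mmap M f x u = Mmap M g x u.
Proof. intros H x u. rewrite (Hom_ext H). reflexivity. Qed.

Definition discP (Xi : Type) (B : Pos Xi) : Pos Xi.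
Proof.
  refine (@mkPos Xi (car B) (fun x a b => a = b) _ _ _);
    [reflexivity | intros; congruence | auto].
Defined.

Definition discHom (Xi : Type) (E B : Pos Xi) (Hd : forall x a b, le E x a b -> a = b)
  (f : forall x, car E x -> car B x) : Hom E B :=
  mkHom f (fun x a b h => match Hd x a b h in _ = b' return le B x (f x a) (f x b') with
                          | eq_refl => le_refl B (f x a) end).

Definition didH (Xi : Type) (B : Pos Xi) : Hom (discP B) B :=
  discHom (E := discP B) (B := B) (fun x a b h => h) (fun x (a : car B x) => a).

Lemma didH_surj (Xi : Type) (B : Pos Xi) : surjH (didH B).
Proof. intros x b; exists b; reflexivity. Qed.
Lemma didH_inj (Xi : Type) (B : Pos Xi) : injH (didH B).
Proof. intros x a b H; exact H. Qed.

Definition caseF (Xi : Type) (S T : Pos Xi) (y : Xi) (fl : forall x, car S x -> car T x)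
  (v : car T y) : forall x, car (holeP S y) x -> car T x :=
  fun x a => match a with
             | inl c => fl x c
             | inr b => match b in boxT _ w return car T w with Box _ => v end
             end.

Definition caseH (Xi : Type) (S T : Pos Xi) (y : Xi) (fl : forall x, car S x -> car T x)
  (v : car T y) : Hom (holeP S y) T :=
  discHom (E := holeP S y) (fun x a b h => h) (caseF fl v).

Section Upd.
Variable Xi : Type.
Variable E : Pos Xi.
Variable T : Xi -> Type.

Definition upd (s0 : {x & car E x}) (f : forall x, car E x -> T x) (v : T (projT1 s0))
  : forall x, car E x -> T x :=
  fun x e => match excluded_middle_informative (existT (car E) x e = s0) with
             | left H => eq_rect (projT1 s0) T v x (eq_sym (f_equal (@projT1 _ _) H))
             | right _ => f x e
             end.
Arguments upd s0 f v x e : clear implicits.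

Lemma upd_neq s0 f v x e : existT (car E) x e <> s0 -> upd s0 f v x e = f x e.
Proof.
  intro H; unfold upd; destruct (excluded_middle_informative _) as [H'|H']; tauto.
Qed.

Lemma upd_at z a0 f v : upd (existT (car E) z a0) f v z a0 = v.
Proof.
  unfold upd; destruct (excluded_middle_informative _) as [H|H]; [|tauto].
  generalize (eq_sym (f_equal (@projT1 _ _) H)); simpl; intro p.
  rewrite (proof_irrelevance _ p eq_refl); reflexivity.
Qed.

Lemma upd_self s0 f x e : upd s0 f (f (projT1 s0) (projT2 s0)) x e = f x e.
Proof.
  unfold upd; destruct (excluded_middle_informative _) as [H|H]; [|reflexivity].
  subst s0; reflexivity.
Qed.

Lemma upd_congr s0 f f' v x e :
  (forall x e, existT (car E) x e <> s0 -> f x e = f' x e) ->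
  upd s0 f v x e = upd s0 f' v x e.
Proof.
  intro H; unfold upd; destruct (excluded_middle_informative _) as [H'|H']; auto.
Qed.

Lemma upd_ext s0 f f' v v' x e :
  (forall x e, f x e = f' x e) -> v = v' -> upd s0 f v x e = upd s0 f' v' x e.
Proof.
  intros H Hv; subst v'; unfold upd; destruct (excluded_middle_informative _); auto.
Qed.

End Upd.
Arguments upd {Xi E T} s0 f v x e.
Lemma upd_map (Xi : Type) (E : Pos Xi) (T T' : Xi -> Type) (G : forall x, T x -> T' x) s0 f v x e :
  G x (@upd Xi E T s0 f v x e) = @upd Xi E T' s0 (fun x e => G x (f x e)) (G _ v) x e.
Proof.
  unfold upd; destruct (excluded_middle_informative _) as [H|H]; [|reflexivity].
  generalize (eq_sym (f_equal (@projT1 _ _) H)); intro p. destruct s0 as [z a0]. simpl in p. subst z. reflexivity.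
Qed.


Lemma colim_jsurj (Xi : Type) (D : Diagram Xi) (Cp : Pos Xi) (c : forall i, Hom (dobj D i) Cp) :
  is_colimit c -> forall x a, exists i b, c i x b = a.
Proof.
  intros [Hco Hu] x a.
  set (Im := subP (A := Cp) (fun x a => exists i b, c i x b = a)).
  set (e := fun i => @mkHom _ (dobj D i) Im
              (fun x b => exist _ (c i x b) (ex_intro _ i (ex_intro _ b eq_refl)))
              (fun x a b h => mono (c i) h)).
  assert (He : cocone e).
  { intros i j h y b. apply eq_sig_hprop; [intros; apply proof_irrelevance|].
    simpl. apply Hco. }
  destruct (Hu Im e He) as [uI [HuI _]].
  destruct (Hu Cp c Hco) as [u0 [_ Hu0]].
  assert (E1 := Hu0 (idH Cp) (fun i x b => eq_refl) x a).
  assert (E2 : forall i x b, compH (inclH _) uI x (c i x b) = c i x b).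
  { intros i y b; simpl; rewrite HuI; reflexivity. }
  assert (E3 := Hu0 _ E2 x a).
  simpl in E1, E3.
  rewrite E1. rewrite <- E3. exact (proj2_sig (uI x a)).
Qed.

Section FS.
Variable Xi : Type.
Variable B : Pos Xi.
Unset Implicit Arguments.
Variable C : forall x, car B x -> Prop.
Set Implicit Arguments.

Definition Cl (l : list {x & car B x}) : forall x, car B x -> Prop :=
  fun x a => C x a /\ In (existT (car B) x a) l.
Arguments Cl l x a : clear implicits.

Definition dmapF (l1 l2 : list {x & car B x}) (h : forall s, In s l1 -> In s l2)
  : Hom (subP (Cl l1)) (subP (Cl l2)) :=
  @mkHom Xi (subP (Cl l1)) (subP (Cl l2)) (fun x (u : car (subP (Cl l1)) x) => exist _ (proj1_sig u)
             (conj (proj1 (proj2_sig u)) (h _ (proj2 (proj2_sig u)))))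
        (fun x u v H => H).

Definition finDiag : Diagram Xi :=
  {| dI := list {x & car B x};
     dle := fun l1 l2 => forall s, In s l1 -> In s l2;
     dobj := fun l => subP (Cl l);
     dmap := dmapF |}.

Definition cincH (l : list {x & car B x}) : Hom (subP (Cl l)) (subP C) :=
  @mkHom Xi (subP (Cl l)) (subP C) (fun x (u : car (subP (Cl l)) x) => exist _ (proj1_sig u) (proj1 (proj2_sig u))) (fun x u v H => H).

Lemma sig_eq_pi (T : Type) (Q : T -> Prop) (u v : {a : T | Q a}) :
  proj1_sig u = proj1_sig v -> u = v.
Proof. intro H; apply eq_sig_hprop; [intros; apply proof_irrelevance | exact H]. Qed.

Lemma finDiag_directed : directed finDiag.
Proof.
  split; [|split; [|split; [|split; [|split]]]].
  - intros i s H; exact H.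
  - intros i j k h1 h2 s H; auto.
  - constructor; exact nil.
  - intros i j; exists (i ++ j); split; intros s H; apply in_or_app; auto.
  - intros i h x a; apply sig_eq_pi; reflexivity.
  - intros i j k h1 h2 h3 x a; apply sig_eq_pi; reflexivity.
Qed.

Lemma finDiag_colim : @is_colimit Xi finDiag (subP C) cincH.
Proof.
  split.
  - intros i j h x a; apply sig_eq_pi; reflexivity.
  - intros E e He.
    assert (Hpi : forall l x (a b : car (subP (Cl l)) x), proj1_sig a = proj1_sig b ->
                  e l x a = e l x b).
    { intros l x a b H; f_equal; apply sig_eq_pi; exact H. }
    assert (Hsub : forall l1 l2 (h : forall s, In s l1 -> In s l2) x (a : car (subP (Cl l1)) x)
                   (b : car (subP (Cl l2)) x), proj1_sig a = proj1_sig b ->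
                   e l1 x a = e l2 x b).
    { intros l1 l2 h x a b H. rewrite <- (He l1 l2 h x a). apply Hpi. exact H. }
    set (uf := fun x (a : car (subP C) x) =>
           e (existT (car B) x (proj1_sig a) :: nil) x
             (exist _ (proj1_sig a) (conj (proj2_sig a) (or_introl eq_refl)))).
    assert (Hm : forall x a b, le (subP C) x a b -> le E x (uf x a) (uf x b)).
    { intros x a b Hab.
      set (l2 := existT (car B) x (proj1_sig a) :: existT (car B) x (proj1_sig b) :: nil).
      assert (Ha : Cl l2 x (proj1_sig a)) by (split; [exact (proj2_sig a)| left; reflexivity]).
      assert (Hb : Cl l2 x (proj1_sig b)) by (split; [exact (proj2_sig b)| right; left; reflexivity]).
      assert (E1 : uf x a = e l2 x (exist _ _ Ha)).
      { unfold uf. apply Hsub; [intros s [H|[]]; left; exact H | reflexivity]. }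
      assert (E2 : uf x b = e l2 x (exist _ _ Hb)).
      { unfold uf. apply Hsub; [intros s [H|[]]; right; left; exact H | reflexivity]. }
      rewrite E1, E2.
      apply (mono (e l2)). exact Hab. }
    exists (mkHom uf Hm). split.
    + intros i x a; simpl; unfold uf. apply Hsub; [|reflexivity].
      intros s [H|[]]; subst s; exact (proj2 (proj2_sig a)).
    + intros u' Hu' x a. simpl. unfold uf.
      rewrite <- Hu'. f_equal. apply sig_eq_pi; reflexivity.
Qed.

Lemma FS (M0 : Monad Xi) (Hfin : finitary M0) y (s0 : car (Mo M0 (subP C)) y) :
  exists l (r : car (Mo M0 (subP (Cl l))) y), Mmap M0 (cincH l) y r = s0.
Proof.
  pose proof (Hfin finDiag (subP C) cincH finDiag_directed finDiag_colim) as H.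
  destruct (colim_jsurj H s0) as [l [r Hr]]. exists l, r. exact Hr.
Qed.
End FS.
Arguments Cl {Xi B} C l x a.


Section Main.
Unset Implicit Arguments.
Variable Xi : Type.
Variable M : Monad Xi.
Variable S : Pos Xi.
Variable xi : Xi.
Variable K : car (Mo M S) xi -> Prop.
Variable A : Alg M.
Variable phi : Hom (Mo M S) (acar A).
Variable P : car (acar A) xi -> Prop.
Hypothesis phi_hom : forall x u, phi x (flat M S x u) = act A x (Mmap M phi x u).
Hypothesis HK : forall s, K s <-> P (phi xi s).
Hypothesis HS : forall x a b, le S x a b <-> a = b.
Hypothesis Hstd : standard_ordering M.
Set Implicit Arguments.

Definition gA (z : Xi) (c : car (acar A) z) : Hom (holeP S z) (acar A) :=
  caseH (fun x c' => phi x (sing M S x c')) c.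
Definition Fp (z : Xi) (p : car (Mo M (holeP S z)) xi) (c : car (acar A) z) :=
  act A xi (Mmap M (gA c) xi p).
Definition syntA (z : Xi) (a b : car (acar A) z) :=
  forall p, P (Fp p a) -> P (Fp p b).

Lemma syntA_eq z (a b : car (acar A) z) : a = b -> syntA a b.
Proof. intros -> p H; exact H. Qed.
Lemma syntA_trans z (a b c : car (acar A) z) : syntA a b -> syntA b c -> syntA a c.
Proof. intros H1 H2 p H; auto. Qed.

Lemma plug_phi z (p : car (Mo M (holeP S z)) xi) s : phi xi (plug p s) = Fp p (phi z s).
Proof.
  unfold plug, Fp. rewrite phi_hom, <- Mmap_comp. f_equal. apply Mmap_ext.
  intros x [c|b]; [reflexivity| destruct b; reflexivity].
Qed.

Lemma synt_iff z s t : syntactic K (z:=z) s t <-> syntA (phi z s) (phi z t).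
Proof.
  unfold syntactic, syntA; split; intros H p.
  - specialize (H p). rewrite !HK, !plug_phi in H. exact H.
  - rewrite !HK, !plug_phi. apply H.
Qed.

Lemma le_X_eq x (s t : car (Mo M S) x) : le (Mo M S) x s t -> s = t.
Proof.
  intro H. apply Hstd in H. destruct H as [u [H1 H2]]. subst s t.
  apply Mmap_ext. intros y [[a b] h]. simpl in *. apply HS. exact h.
Qed.

Lemma synt_pre : preorder_above (syntactic K).
Proof.
  split; [|split].
  - intros x a p H; exact H.
  - intros x a b c H1 H2 p H; auto.
  - intros x a b H. apply le_X_eq in H. subst b. intros p H; exact H.
Qed.

Section SR.
Variable E : Pos Xi.
Hypothesis Ed : forall x a b, le E x a b -> a = b.

Lemma SR (s0 : {x & car E x}) (g g' : Hom E (acar A)) :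
  (forall x e, existT (car E) x e <> s0 -> g x e = g' x e) ->
  (forall x e, exists s, phi x s = g x e) ->
  syntA (g _ (projT2 s0)) (g' _ (projT2 s0)) ->
  forall y (r : car (Mo M E) y),
    syntA (act A y (Mmap M g y r)) (act A y (Mmap M g' y r)).
Proof.
  destruct s0 as [z a0]; simpl.
  intros Hagree Himg Hz y r p Hp.
  set (sx := fun x e => proj1_sig (constructive_indefinite_description _ (Himg x e))).
  assert (Hsx : forall x e, phi x (sx x e) = g x e).
  { intros x e; unfold sx; destruct (constructive_indefinite_description _ _); auto. }
  set (inlH := @mkHom Xi S (holeP S z) (fun x c => inl c)
                 (fun x a b h => f_equal inl (proj1 (HS x a b) h))).
  set (k := discHom Ed (@upd Xi E (car (Mo M (holeP S z))) (existT (car E) z a0)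
              (fun x e => Mmap M inlH x (sx x e)) (sing M (holeP S z) z (inr (Box z))))).
  set (gc := fun c : car (acar A) z =>
               discHom (B := acar A) Ed (@upd Xi E (car (acar A)) (existT (car E) z a0) g c)).
  set (k' := caseH (fun x c => sing M (holeP S z) x (inl c)) (flat M (holeP S z) y (Mmap M k y r))).
  set (q := flat M (holeP S z) xi (Mmap M k' xi p)).
  assert (Key : forall c, Fp q c = Fp p (act A y (Mmap M (gc c) y r))).
  { intro c. unfold Fp, q. rewrite flat_nat, <- act_assoc, <- !Mmap_comp.
    f_equal. apply Mmap_ext. intros x [c'|b]; simpl.
    - rewrite sing_nat, act_unit. reflexivity.
    - destruct b. rewrite flat_nat, <- act_assoc, <- !Mmap_comp.
      f_equal. apply Mmap_ext. intros x e. simpl.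
      rewrite (@upd_map Xi E _ _ (fun x u => act A x (Mmap M (gA c) x u))).
      apply upd_ext.
      + intros x' e'. rewrite <- Mmap_comp.
        transitivity (act A x' (Mmap M (compH phi (sing M S)) x' (sx x' e'))).
        { f_equal. apply Mmap_ext. reflexivity. }
        rewrite Mmap_comp, <- phi_hom, flat_Msing. apply Hsx.
      + rewrite sing_nat, act_unit. reflexivity. }
  assert (E1 : Fp q (g z a0) = Fp p (act A y (Mmap M g y r))).
  { rewrite Key. f_equal. f_equal. apply Mmap_ext. intros x e. simpl.
    exact (@upd_self Xi E (car (acar A)) (existT (car E) z a0) g x e). }
  assert (E2 : Fp q (g' z a0) = Fp p (act A y (Mmap M g' y r))).
  { rewrite Key. f_equal. f_equal. apply Mmap_ext. intros x e. simpl.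
    rewrite (@upd_congr Xi E (car (acar A)) (existT (car E) z a0) g g' _ x e Hagree).
    exact (@upd_self Xi E (car (acar A)) (existT (car E) z a0) g' x e). }
  rewrite <- E2. apply Hz. rewrite E1. exact Hp.
Qed.

Lemma Repl (Kt : Type) (key : forall x, car E x -> Kt)
  (keyinj : forall x e x' e', key x e = key x' e' -> existT (car E) x e = existT (car E) x' e')
  (l : list Kt) (Hl : forall x e, In (key x e) l) (g1 g2 : Hom E (acar A))
  (Hv : forall x e, exists s t, phi x s = g1 x e /\ phi x t = g2 x e /\ syntactic K s t)
  y (r : car (Mo M E) y) :
  syntA (act A y (Mmap M g1 y r)) (act A y (Mmap M g2 y r)).
Proof.
  set (hf := fun L x e => if excluded_middle_informative (In (key x e) L) then g2 x e else g1 x e).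
  set (h := fun L => discHom (B := acar A) Ed (hf L)).
  assert (Himg : forall L x e, exists s, phi x s = h L x e).
  { intros L x e; simpl; unfold hf. destruct (Hv x e) as [s [t [H1 [H2 _]]]].
    destruct (excluded_middle_informative _); eauto. }
  assert (Hmain : forall L, syntA (act A y (Mmap M g1 y r)) (act A y (Mmap M (h L) y r))).
  { induction L as [|a L IH].
    - apply syntA_eq. f_equal. apply Mmap_ext. intros x e; simpl; unfold hf.
      destruct (excluded_middle_informative _) as [H|H]; [destruct H|reflexivity].
    - apply (syntA_trans IH).
      destruct (classic (exists x e, key x e = a /\ ~ In a L)) as [[x0 [e0 [Hk Hn]]]|Hno].
      + apply SR with (s0 := existT (car E) x0 e0).
        * intros x e Hne. simpl. unfold hf.
          assert (Hka : key x e <> a).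
          { intro Hka. apply Hne. apply keyinj. congruence. }
          destruct (excluded_middle_informative (In (key x e) L)) as [H1|H1];
          destruct (excluded_middle_informative (In (key x e) (a :: L))) as [H2|H2];
          simpl in *; auto; exfalso; intuition congruence.
        * apply Himg.
        * simpl. unfold hf.
          destruct (excluded_middle_informative (In (key x0 e0) L)) as [H1|H1];
            [rewrite Hk in H1; tauto|].
          destruct (excluded_middle_informative (In (key x0 e0) (a :: L))) as [H2|H2];
            [|exfalso; apply H2; left; auto].
          destruct (Hv x0 e0) as [s [t [H3 [H4 H5]]]].
          rewrite <- H3, <- H4. apply synt_iff. exact H5.
      + apply syntA_eq. f_equal. apply Mmap_ext. intros x e; simpl; unfold hf.
        destruct (excluded_middle_informative (In (key x e) L)) as [H1|H1];
        destruct (excluded_middle_informative (In (key x e) (a :: L))) as [H2|H2];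
        auto.
        * exfalso; apply H2; right; exact H1.
        * exfalso. destruct H2 as [H2|H2]; [|tauto].
          apply Hno. exists x, e. split; [auto|]. rewrite H2. exact H1. }
  apply (syntA_trans (Hmain l)). apply syntA_eq. f_equal. apply Mmap_ext.
  intros x e; simpl; unfold hf.
  destruct (excluded_middle_informative _) as [H|H]; [reflexivity| destruct (H (Hl x e))].
Qed.
End SR.

Definition C_A : forall x, car (prodP (acar A) (acar A)) x -> Prop :=
  fun x ab => exists s t, phi x s = fst ab /\ phi x t = snd ab /\ syntactic K (z:=x) s t.

Lemma G (M0 : Monad Xi) (rho : forall B, Hom (Mo M0 B) (Mo M B)) (Hfin : finitary M0)
  (Hnat : forall B B' (f : Hom B B') x u, rho B' x (Mmap M0 f x u) = Mmap M f x (rho B x u))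
  (Hsurj : preserves_surjective M) y (s0 : car (Mo M0 (subP C_A)) y) :
  syntA (act A y (Mmap M (compH (pr1H _ _) (inclH C_A)) y (rho _ y s0)))
        (act A y (Mmap M (compH (pr2H _ _) (inclH C_A)) y (rho _ y s0))).
Proof.
  destruct (FS Hfin s0) as [l [r Hr]]. subst s0. rewrite !Hnat. rewrite <- !Mmap_comp.
  destruct (Hsurj _ _ (didH (subP (Cl C_A l))) (@didH_surj _ _) y (rho _ y r)) as [rd Hrd].
  rewrite <- Hrd, <- !Mmap_comp.
  set (key := fun x (e : car (discP (subP (Cl C_A l))) x) =>
                existT (car (prodP (acar A) (acar A))) x (proj1_sig e)).
  apply (@Repl (discP (subP (Cl C_A l))) (fun x a b h => h) _ key) with (l := l).
  - intros x e x' e' H. destruct e as [a pa], e' as [a' pa']. unfold key in H; simpl in H.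
    pose proof (f_equal (@projT1 _ _) H) as Hx. simpl in Hx. subst x'.
    apply inj_pair2 in H. subst a'. f_equal. f_equal. apply proof_irrelevance.
  - intros x e. exact (proj2 (proj2_sig e)).
  - intros x e. simpl. destruct (proj1 (proj2_sig e)) as [s [t [H1 [H2 H3]]]].
    exists s, t. auto.
Qed.

Lemma W (CC : Alg M -> Prop) (HA : CC A)
  (M0 : Monad Xi) (rho : forall B, Hom (Mo M0 B) (Mo M B)) (Hfin : finitary M0)
  (Hnat : forall B B' (f : Hom B B') x u, rho B' x (Mmap M0 f x u) = Mmap M f x (rho B x u))
  (Hsurj : preserves_surjective M) (Hdense : dense_over rho (prod_closure CC))
  (D : Pos Xi) (f1 f2 : Hom D (Mo M S))
  (Hf : forall x d, syntactic K (z:=x) (f1 x d) (f2 x d)) y (w : car (Mo M D) y) :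
  syntactic K (z:=y) (flat M S y (Mmap M f1 y w)) (flat M S y (Mmap M f2 y w)).
Proof.
  apply synt_iff. rewrite !phi_hom, <- !Mmap_comp.
  set (h := @mkHom Xi D (subP C_A)
         (fun x d => exist _ (phi x (f1 x d), phi x (f2 x d))
            (ex_intro _ (f1 x d) (ex_intro _ (f2 x d) (conj eq_refl (conj eq_refl (Hf x d))))))
         (fun x a b H => conj (mono phi (mono f1 H)) (mono phi (mono f2 H)))).
  destruct (Hdense (prod_alg A A) C_A y (Mmap M h y w) (pc_prod (pc_base HA) (pc_base HA)))
    as [s0 Hs0].
  assert (H1 := f_equal fst Hs0). assert (H2 := f_equal snd Hs0). simpl in H1, H2.
  assert (E1 : Mmap M (compH phi f1) y w =
               Mmap M (pr1H _ _) y (Mmap M (inclH C_A) y (Mmap M h y w)))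
    by (rewrite <- !Mmap_comp; apply Mmap_ext; reflexivity).
  assert (E2 : Mmap M (compH phi f2) y w =
               Mmap M (pr2H _ _) y (Mmap M (inclH C_A) y (Mmap M h y w)))
    by (rewrite <- !Mmap_comp; apply Mmap_ext; reflexivity).
  rewrite E1, E2, <- H1, <- H2, <- !Mmap_comp.
  apply G; assumption.
Qed.
End Main.


Theorem theorem4p14 (Xi : Type) (M : Monad Xi) (CC : Alg M -> Prop)
  (S : Pos Xi) (xi : Xi) (K : car (Mo M S) xi -> Prop) :
  good_monad M ->
  essentially_finitary CC ->
  alphabet S ->
  (exists (A : Alg M) (phi : Hom (Mo M S) (acar A)), CC A /\ recognises K phi) ->
  congruence_ordering (flat M S) (syntactic K).
Proof.
  intros [Hinj [Hsurj [Hbij [Hpre Hstd]]]] [M0 [rho [Hfin [[Hnat _] Hdense]]]] [HS _]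
         [A [phi [HA [Hphi [P [Hup HK]]]]]].
  assert (Hpo : preorder_above (syntactic K)) by (apply (synt_pre K HS Hstd)).
  exists Hpo.
  assert (Htr : forall z (a b c : car (Mo M S) z), syntactic K a b -> syntactic K b c -> syntactic K a c).
  { intros z a b c H1 H2 p H; auto. }
  assert (HW := @W Xi M S xi K A phi P Hphi HK HS CC HA M0 rho Hfin Hnat Hsurj Hdense).
  assert (HE : forall y (a b : car (Mo M (Mo M S)) y), Mmap M (quotH Hpo) y a = Mmap M (quotH Hpo) y b ->
                 syntactic K (flat M S y a) (flat M S y b)).
  { intros y a b Hab.
    destruct (Hsurj _ _ (didH (Mo M S)) (@didH_surj _ (Mo M S)) y a) as [ad Had].
    destruct (Hsurj _ _ (didH (Mo M S)) (@didH_surj _ (Mo M S)) y b) as [bd Hbd].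
    set (qd := discHom (E := discP (Mo M S)) (B := discP (quotP Hpo)) (fun x a b h => h) (fun x a => (quotH Hpo) x a)).
    assert (Hqd : Mmap M qd y ad = Mmap M qd y bd).
    { apply (Hinj _ _ (didH (quotP Hpo)) (@didH_inj _ (quotP Hpo))). rewrite <- !Mmap_comp.
      transitivity (Mmap M (compH (quotH Hpo) (didH (Mo M S))) y ad); [apply Mmap_ext; reflexivity|].
      transitivity (Mmap M (compH (quotH Hpo) (didH (Mo M S))) y bd); [|apply Mmap_ext; reflexivity].
      rewrite !Mmap_comp, Had, Hbd. exact Hab. }
    set (sigma := discHom (E := discP (quotP Hpo)) (B := discP (Mo M S)) (fun x a b h => h)
          (fun x (c : car (quotP Hpo) x) => proj1_sig (constructive_indefinite_description _ (proj2_sig c)))).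
    assert (Hsig : forall x (a : car (Mo M S) x), syntactic K a (sigma x ((quotH Hpo) x a)) /\
                                           syntactic K (sigma x ((quotH Hpo) x a)) a).
    { intros x a0. simpl.
      destruct (constructive_indefinite_description _ _) as [b0 Hb0]. simpl.
      simpl in Hb0.
      assert (Hc : cls (syntactic K) b0 b0) by (split; intros p H; exact H).
      rewrite <- Hb0 in Hc. exact Hc. }
    set (f2 := compH (didH (Mo M S)) (compH sigma qd)).
    assert (H1 := HW (discP (Mo M S)) (didH (Mo M S)) f2 (fun x d => proj1 (Hsig x d)) y ad).
    assert (H2 := HW (discP (Mo M S)) f2 (didH (Mo M S)) (fun x d => proj2 (Hsig x d)) y bd).
    rewrite Had in H1. rewrite Hbd in H2.
    assert (Hf2 : Mmap M f2 y ad = Mmap M f2 y bd).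
    { unfold f2. rewrite !Mmap_comp, Hqd. reflexivity. }
    rewrite Hf2 in H1. eapply Htr; eassumption. }
  intros x s t Hle.
  apply Hstd in Hle. destruct Hle as [u [Hu1 Hu2]].
  set (R := subP (A := prodP (Mo M S) (Mo M S)) (fun x ab => syntactic K (fst ab) (snd ab))).
  assert (Hrefl : forall z (a : car (Mo M S) z), syntactic K a a) by (intros z a p H; exact H).
  set (qt := @mkHom Xi R (ordP (quotP Hpo))
         (fun x ab => exist _ ((quotH Hpo) x (fst (proj1_sig ab)), (quotH Hpo) x (snd (proj1_sig ab)))
            (ex_intro _ (fst (proj1_sig ab)) (ex_intro _ (snd (proj1_sig ab))
              (conj (conj (Hrefl _ _) (Hrefl _ _)) (conj (conj (Hrefl _ _) (Hrefl _ _))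
                 (proj2_sig ab))))))
         (fun x a b H => conj (mono (quotH Hpo) (proj1 H)) (mono (quotH Hpo) (proj2 H)))).
  assert (Hcls : forall z (a : car (Mo M S) z) (c : car (quotP Hpo) z), proj1_sig c a -> (quotH Hpo) z a = c).
  { intros z a [F [a1 HF]] Ha. subst F. apply sig_eq_pi. simpl.
    simpl in Ha. destruct Ha as [Ha1 Ha2].
    apply functional_extensionality; intro c. apply propositional_extensionality.
    unfold cls; split; intros [Hc1 Hc2]; split; eauto. }
  assert (Hqt : surjH qt).
  { intros y [[X1 X2] h]. pose proof h as h'. destruct h' as [a [b [Ha [Hb Hab]]]].
    exists (exist _ (a, b) Hab). apply sig_eq_pi. simpl.
    f_equal; apply Hcls; assumption. }
  destruct (Hsurj _ _ qt Hqt x u) as [w Hw].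
  set (s' := Mmap M (compH (pr1H (Mo M S) (Mo M S)) (inclH _)) x w).
  set (t' := Mmap M (compH (pr2H (Mo M S) (Mo M S)) (inclH _)) x w).
  assert (Hs' : Mmap M (quotH Hpo) x s = Mmap M (quotH Hpo) x s').
  { rewrite <- Hu1, <- Hw. unfold s'. rewrite <- !Mmap_comp. apply Mmap_ext. reflexivity. }
  assert (Ht' : Mmap M (quotH Hpo) x t' = Mmap M (quotH Hpo) x t).
  { rewrite <- Hu2, <- Hw. unfold t'. rewrite <- !Mmap_comp. apply Mmap_ext. reflexivity. }
  assert (Hmid := HW R (compH (pr1H (Mo M S) (Mo M S)) (inclH _)) (compH (pr2H (Mo M S) (Mo M S)) (inclH _))
                    (fun x d => proj2_sig d) x w).
  apply (Htr _ _ _ _ (HE _ _ _ Hs')).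
  apply (Htr _ _ _ _ Hmid).
  apply HE. exact Ht'.
Qed.
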